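(* Let $k\ge3$. There is no family of bijections $\omega_n:\mathcal S_n\to\mathfrak S_{n+1}(1243,2143)$, $n\ge0$, such that for every $n$ and every $\pi\in\mathcal S_n$, $\tau_k(\pi)$ equals the number of subsequences of type $213\ldots k$ in $\omega_n(\pi)$.
   Context: $\mathcal S_n$ is the set of Schröder paths: lattice paths from $(0,0)$ to $(n,n)$ using east $(1,0)$, north $(0,1)$ and diagonal $(1,1)$ steps never going below $y=x$. For an east or diagonal step $s$ with left-most point $(a,c)$, $ht(s)=c-a$. For a Schröder path $\pi$, $\tau_k(\pi)=\binom{0}{k-1}+\sum_s\binom{ht(s)}{k-1}$, summed over east and diagonal steps (with $\binom{i}{j}=0$ if $j<0$ or $i<j$). $\mathfrak S_m(1243,2143)$ is the set of permutations of $\{1,\dots,m\}$ with no subsequence of the same relative order as $1243$ or $2143$; a subsequence has type $\sigma$ if it has the same relative order as $\sigma$; $213\ldots k=2,1,3,\dots,k$. *)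

(* Defs.v *)
From mathcomp Require Import all_boot all_fingroup.
Set Implicit Arguments. Unset Strict Implicit. Unset Printing Implicit Defensive.

Inductive step := East | North | Diag.

(* [schroder_from a c n p]: the path p, started at the point (a,c) with a <= c,
   stays weakly above y = x at every lattice point and ends at (n,n). *)
Fixpoint schroder_from (a c n : nat) (p : seq step) : bool :=
  match p with
  | [::] => (a == n) && (c == n)
  | North :: q => schroder_from a c.+1 n q
  | East :: q => (a < c) && schroder_from a.+1 c n q
  | Diag :: q => schroder_from a.+1 c.+1 n q
  end.

Definition is_schroder (n : nat) (p : seq step) : bool := schroder_from 0 0 n p.

Definition schroder_path (n : nat) := {p : seq step | is_schroder n p}.

(* heights ht(s) = c - a of the east and diagonal steps s, whose left-most
   point is (a,c), when the path starts at (a,c). *)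
Fixpoint heights_from (a c : nat) (p : seq step) : seq nat :=
  match p with
  | [::] => [::]
  | North :: q => heights_from a c.+1 q
  | East :: q => (c - a) :: heights_from a.+1 c q
  | Diag :: q => (c - a) :: heights_from a.+1 c.+1 q
  end.

Definition tau (k : nat) (p : seq step) : nat :=
  'C(0, k.-1) + \sum_(h <- heights_from 0 0 p) 'C(h, k.-1).

(* Number of subsequences of the permutation w (one-line notation
   w(0) w(1) ... w(m-1)) having the same relative order as the pattern pat
   (given by a sequence of distinct naturals): a subsequence is a strictly
   increasing choice of positions f 0 < f 1 < ... < f (size pat - 1). *)
Definition occurrences (pat : seq nat) (m : nat) (w : {perm 'I_m}) : nat :=
  #|[set f : {ffun 'I_(size pat) -> 'I_m} |
      [forall i : 'I_(size pat), forall j : 'I_(size pat),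
         ((i < j) ==> (f i < f j)) &&
         ((w (f i) < w (f j)) == (nth 0 pat i < nth 0 pat j))]]|.

Definition pat1243 : seq nat := [:: 0; 1; 3; 2].
Definition pat2143 : seq nat := [:: 1; 0; 3; 2].
(* the pattern 2 1 3 4 ... k, shifted to 0-based values *)
Definition pat213k (k : nat) : seq nat := [:: 1, 0 & iota 2 (k - 2)].

Definition avoids_1243_2143 (m : nat) (w : {perm 'I_m}) : bool :=
  (occurrences pat1243 w == 0) && (occurrences pat2143 w == 0).

Definition av_perm (m : nat) := {w : {perm 'I_m} | avoids_1243_2143 w}.

(* Main.v *)
Require Import Defs.
From mathcomp Require Import all_boot all_fingroup.
From mathcomp Require Import zify.

Lemma sf_north a c n m q : schroder_from a c n (nseq m North ++ q) = schroder_from a (c + m) n q.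
Proof. elim: m c => [|m IH] c /=; first by rewrite addn0. by rewrite IH addSnnS. Qed.

Lemma sf_east m a n : a + m = n -> schroder_from a n n (nseq m East).
Proof.
elim: m a => [|m IH] a /= H; first by rewrite addn0 in H; rewrite H !eqxx.
apply/andP; split; first lia. apply: IH; lia.
Qed.

Lemma hf_north a c m q : heights_from a c (nseq m North ++ q) = heights_from a (c + m) q.
Proof. elim: m c => [|m IH] c /=; first by rewrite addn0. by rewrite IH addSnnS. Qed.

Section Occ.
Variables (k : nat) (w : {perm 'I_k.+1}) (P : rel 'I_k).

Definition incr (f : {ffun 'I_k -> 'I_k.+1}) := forall i j : 'I_k, i < j -> f i < f j.

Lemma gap f : incr f -> forall n (i j : 'I_k), (j : nat) = i + n -> f i + n <= f j.
Proof.
move=> Hf; elim=> [|n IH] i j E.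
  by rewrite addn0; have -> : j = i by apply: val_inj; rewrite /= E addn0.
have Hl : i + n < k by have := ltn_ord j; lia.
have H2 := IH i (Ordinal Hl) erefl.
have H1 := Hf (Ordinal Hl) j ltac:(rewrite /=; lia).
lia.
Qed.

Lemma bounds f (i0 : 'I_k) : val i0 = 0 -> incr f -> forall i : 'I_k, i <= f i <= i.+1.
Proof.
move=> H0 Hf i; have H0' : (i0 : nat) = 0 := H0; apply/andP; split.
  have := gap f Hf i i0 i ltac:(lia); lia.
have Hl : k.-1 < k by case: (k) i => [[]|] //.
have Hi := ltn_ord i.
have := gap f Hf (k.-1 - i) i (Ordinal Hl) ltac:(simpl; lia).
have := ltn_ord (f (Ordinal Hl)). lia.
Qed.

Lemma incr_lift f (i0 : 'I_k) : val i0 = 0 -> incr f ->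
  exists t : 'I_k.+1, f = [ffun i => lift t i].
Proof.
move=> H0 Hf.
have B := bounds f i0 H0 Hf.
pose t := find (fun i : 'I_k => (f i : nat) != (i : nat)) (enum 'I_k).
have tk : t <= k by rewrite -[X in _ <= X]size_enum_ord find_size.
exists (inord t); apply/ffunP => i; rewrite ffunE; apply: val_inj.
rewrite /= /bump inordK ?ltnS //.
case: (leqP t i) => Hti.
- have Htk : t < k by apply: leq_trans (ltn_ord i).
  have Hhas : has (fun i : 'I_k => (f i : nat) != (i : nat)) (enum 'I_k)
    by rewrite has_find size_enum_ord.
  have := nth_find i Hhas; rewrite -/t.
  set x := nth i _ t.
  have Hx : (x : nat) = t by rewrite /x nth_enum_ord.
  move=> /eqP Hne.
  have Hfx : (f x : nat) = x.+1 by have := B x; lia.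
  have := gap f Hf (i - t) x i ltac:(lia).
  have := B i. lia.
- by have := before_find i Hti; rewrite nth_ord_enum => /negbFE/eqP ->.
Qed.

Lemma occ_le (i0 i1 i2 : 'I_k) : (i0 : nat) = 0 -> (i1 : nat) = 1 -> (i2 : nat) = 2 ->
  P i1 i0 -> P i0 i2 ->
  #|[set f : {ffun 'I_k -> 'I_k.+1} |
      [forall i : 'I_k, forall j : 'I_k,
         ((i < j) ==> (f i < f j)) && ((w (f i) < w (f j)) == P i j)]]| <= k.
Proof.
move=> H0 H1 H2 P10 P02.
set S := [set f | _].
have inS f : f \in S -> incr f /\ forall i j, (w (f i) < w (f j)) = P i j.
  rewrite inE => /forallP H; split.
    by move=> i j Hij; have /forallP/(_ j)/andP[/implyP/(_ Hij)] := H i.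
  by move=> i j; have /forallP/(_ j)/andP[_ /eqP] := H i.
pose Fa := [ffun i => lift (ord0 : 'I_k.+1) i].
pose Fb := [ffun i => lift (ord_max : 'I_k.+1) i].
have noboth : Fa \in S -> Fb \in S -> False.
  move=> /inS[_ Ha] /inS[_ Hb].
  have e1 : Fa i1 = Fb i2 by apply: val_inj; rewrite !ffunE /= /bump H1 H2 /=; have := ltn_ord i2; case: leqP; lia.
  have e2 : Fa i0 = Fb i1 by apply: val_inj; rewrite !ffunE /= /bump H1 H0 /=; have := ltn_ord i2; case: leqP; lia.
  have a := Ha i1 i0; rewrite P10 e1 e2 in a.
  have b := Hb i1 i0; rewrite P10 in b.
  have c := Hb i0 i2; rewrite P02 in c.
  have := ltn_trans (ltn_trans a b) c; by rewrite ltnn.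
pose x := (if Fa \in S then ord_max else ord0 : 'I_k.+1).
have sub : S \subset [set [ffun i => lift t i] | t in [set: 'I_k.+1] :\ x].
  apply/subsetP => f fS.
  have [If _] := inS f fS.
  have [t Ht] := incr_lift f i0 H0 If.
  apply/imsetP; exists t => //.
  rewrite !inE andbT /x; apply/eqP => Etx.
  case: ifP Etx => HFa Etx; subst t.
  - by apply: noboth => //; rewrite /Fb -Ht.
  - by rewrite /Fa -Ht fS in HFa.
apply: leq_trans (subset_leq_card sub) _.
apply: leq_trans (leq_imset_card _ _) _.
have := cardsD1 x [set: 'I_k.+1]; rewrite inE cardsT card_ord add1n => -[E]; by rewrite -E.
Qed.
End Occ.

Theorem mainTheorem18 (k : nat) : 3 <= k ->
  ~ exists omega : forall n : nat, schroder_path n -> av_perm n.+1,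
      (forall n, bijective (omega n)) /\
      (forall n (pi : schroder_path n),
         tau k (sval pi) = occurrences (pat213k k) (sval (omega n pi))).
Proof.
case: k => [|[|[|k]]] // _ [omega [_ Hom]].
pose p := nseq k.+3 North ++ nseq k.+3 East.
have Hp : is_schroder k.+3 p.
  by rewrite /is_schroder sf_north add0n; apply: sf_east.
have := Hom k.+3 (exist _ p Hp); rewrite /=.
have Htau : k.+4 <= tau k.+3 p.
  rewrite /tau /p hf_north add0n /= !big_cons.
  rewrite subn0 subSS subn0 binSn binn. lia.
set w := sval _.
have Hs : size (pat213k k.+3) = k.+3 by rewrite /pat213k /= size_iota.
have Hocc : occurrences (pat213k k.+3) w <= k.+3.
  rewrite /occurrences.
  set pat := pat213k k.+3 in Hs *.
  move: w; rewrite -[k.+4]/((k.+3).+1) -Hs => w.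
  have l0 : 0 < size pat by rewrite Hs.
  have l1 : 1 < size pat by rewrite Hs.
  have l2 : 2 < size pat by rewrite Hs.
  refine (occ_le _ w (fun i j : 'I_(size pat) =>
            nth 0 pat i < nth 0 pat j)
          (Ordinal l0) (Ordinal l1) (Ordinal l2) erefl erefl erefl _ _).
  by change (nth 0 pat 1 < nth 0 pat 0).
  by change (nth 0 pat 0 < nth 0 pat 2); rewrite /pat /pat213k subSS subSS subn0.
move=> E; rewrite E in Htau; lia.
Qed.
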